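(* Let $H$ be a finite subgroup of a group $G$, and suppose that $A\subseteq aH\cup bH$, where $a,b\in G$ are elements with $a^{-1}b\in N(H)$ and $(a^{-1}b)^2\notin H$. If $|A|>\frac95\,|H|$, then $|A^{-1}A|<\frac53\,|A|$; moreover, in this case $A^{-1}A$ is a disjoint union of $H$ and two double $H$-cosets (sets of the form $HgH$, $g\in G$), each of size $|H|$.
   Context: $A^{-1}A=\{a_1^{-1}a_2\colon a_1,a_2\in A\}$. For a subgroup $H\le G$, $N(H)=\{g\in G\colon gH=Hg\}$ denotes its normalizer. *)

(* Defs.v *)
(* groups are MathComp's (possibly infinite) [groupType]
   from boot/monoid.v; finite subsets are finmap's [{fset G}]. *)
From HB Require Import structures.
From mathcomp Require Import all_boot monoid.
From mathcomp Require Import finmap.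
Set Implicit Arguments. Unset Strict Implicit. Unset Printing Implicit Defensive.
Local Open Scope fset_scope.

Section Defs.
Variable G : groupType.

Definition is_subgroup (H : {fset G}) : Prop :=
  one \in H /\ (forall x y, x \in H -> y \in H -> mul x y \in H)
  /\ (forall x, x \in H -> inv x \in H).

Definition lcoset (g : G) (H : {fset G}) : {fset G} := [fset mul g h | h in H].
Definition rcoset (H : {fset G}) (g : G) : {fset G} := [fset mul h g | h in H].

Definition in_normalizer (H : {fset G}) (g : G) : Prop := lcoset g H = rcoset H g.

Definition dcoset (H : {fset G}) (g : G) : {fset G} :=
  [fset mul (mul h1 g) h2 | h1 in H, h2 in H].

Definition invprod (A : {fset G}) : {fset G} :=
  [fset mul (inv a1) a2 | a1 in A, a2 in A].
End Defs.

(* Main.v *)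
Require Import Defs.
From HB Require Import structures.
From mathcomp Require Import all_boot monoid.
From mathcomp Require Import finmap.
From mathcomp Require Import zify.
Set Implicit Arguments. Unset Strict Implicit. Unset Printing Implicit Defensive.

Section Aux.
Variable G : groupType.
Local Open Scope group_scope.
Local Open Scope fset_scope.
Implicit Types A H K S T : {fset G}.

Lemma meet K S T : S `<=` K -> T `<=` K -> (#|`K| < #|`S| + #|`T|)%N ->
  exists x, x \in S /\ x \in T.
Proof.
move=> sK tK lt.
have : (S `&` T) != fset0.
  apply/negP => /eqP e; have := cardfsUI S T; rewrite e cardfs0 addn0 => E.
  have : S `|` T `<=` K by rewrite fsubUset sK tK.
  move/fsubset_leq_card.
  lia.
by case/fset0Pn => x; rewrite in_fsetI => /andP[? ?]; exists x.
Qed.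

Lemma card_rmul S g : #|` [fset x * g | x in S]| = #|` S|.
Proof. by rewrite card_imfset //=; apply: mulIg. Qed.

Lemma card_lmul S g : #|` [fset g * x | x in S]| = #|` S|.
Proof. by rewrite card_imfset //=; apply: mulgI. Qed.

Lemma lcosetP g H x : reflect (exists2 h, h \in H & x = g * h) (x \in lcoset g H).
Proof. exact: imfsetP. Qed.

Lemma invprodP A x : reflect (exists u v, [/\ u \in A, v \in A & x = u^-1 * v]) (x \in invprod A).
Proof. apply: (iffP (imfset2P _ _ _ _ _)) => [[u uA [v vA ->]]|[u [v [uA vA ->]]]].
  by exists u, v.
by exists u => //; exists v.
Qed.

Lemma invprod_mem A u v : u \in A -> v \in A -> u^-1 * v \in invprod A.
Proof. by move=> uA vA; apply/invprodP; exists u, v. Qed.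

Lemma dcosetP H g x : reflect (exists h1 h2, [/\ h1 \in H, h2 \in H & x = h1 * g * h2]) (x \in dcoset H g).
Proof. apply: (iffP (imfset2P _ _ _ _ _)) => [[u uA [v vA ->]]|[u [v [uA vA ->]]]].
  by exists u, v.
by exists u => //; exists v.
Qed.

Lemma arith3 n m : (9 * n < 5 * m -> 3 * (n + n + n) < 5 * m)%N.
Proof. lia. Qed.

Lemma key A K X Y (g : G) : X `<=` A -> Y `<=` A -> Y `<=` K ->
  (forall x, x \in X -> x * g \in K) -> (#|`K| < #|`X| + #|`Y|)%N ->
  g \in invprod A.
Proof.
move=> XA YA YK XK lt.
have SK : [fset x * g | x in X] `<=` K.
  by apply/fsubsetP => z /imfsetP [x /= xX ->]; apply: XK.
have lt' : (#|`K| < #|` [fset (x * g)%g | x in X]| + #|`Y|)%N by rewrite card_rmul.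
have [z [/imfsetP [x /= xX ->] xY]] := meet SK YK lt'.
rewrite -(mulKg x g); apply: invprod_mem; first exact: (fsubsetP XA).
exact: (fsubsetP YA).
Qed.

Lemma main H A a b :
  is_subgroup H -> A `<=` lcoset a H `|` lcoset b H ->
  in_normalizer H (a^-1 * b) -> (a^-1 * b) * (a^-1 * b) \notin H ->
  (9 * #|` H| < 5 * #|` A|)%N ->
  (3 * #|` invprod A| < 5 * #|` A|)%N /\
  exists g1 g2 : G,
    invprod A = H `|` dcoset H g1 `|` dcoset H g2 /\
    [disjoint H & dcoset H g1] /\ [disjoint H & dcoset H g2] /\
    [disjoint dcoset H g1 & dcoset H g2] /\
    #|` dcoset H g1| = #|` H| /\ #|` dcoset H g2| = #|` H|.
Proof.
move=> [H1 [HM HV]] sA nH ncc lt.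
set c := a^-1 * b in nH ncc *.
have eb : b = a * c by rewrite /c mulVKg.
have eab : a^-1 * b = c by [].
have ebi : b^-1 = c^-1 * a^-1 by rewrite -invgM -eb.
clearbody c.
have nL x : x \in H -> exists2 y, y \in H & x * c = c * y.
  move=> xH; have : x * c \in rcoset H c by apply/imfsetP; exists x.
  by rewrite -nH => /imfsetP [y /= yH e]; exists y.
have nR x : x \in H -> exists2 y, y \in H & c * x = y * c.
  move=> xH; have : c * x \in lcoset c H by apply/imfsetP; exists x.
  by rewrite nH => /imfsetP [y /= yH e]; exists y.
have cnH : c \notin H by apply: contra ncc => cH; apply: HM.
have cinH : c^-1 \notin H by apply: contra cnH => /HV; rewrite invgK.
have cardL g : #|` lcoset g H| = #|` H| := card_lmul H g.
set A1 := A `&` lcoset a H; set A2 := A `&` lcoset b H.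
have cA : (#|`A| <= #|`A1| + #|`A2|)%N.
  have : A `<=` A1 `|` A2.
    apply/fsubsetP => x xA; have := fsubsetP sA x xA.
    by rewrite !in_fsetU !in_fsetI xA.
  move/fsubset_leq_card => h; have := cardfsUI A1 A2; lia.
have c1 : (#|`A1| <= #|`H|)%N by rewrite -(cardL a); apply: fsubset_leq_card; apply: fsubsetIr.
have c2 : (#|`A2| <= #|`H|)%N by rewrite -(cardL b); apply: fsubset_leq_card; apply: fsubsetIr.
have A1A : A1 `<=` A by apply: fsubsetIl.
have A2A : A2 `<=` A by apply: fsubsetIl.
have A1K : A1 `<=` lcoset a H by apply: fsubsetIr.
have A2K : A2 `<=` lcoset b H by apply: fsubsetIr.
have b11 : (#|`lcoset a H| < #|`A1| + #|`A1|)%N by rewrite cardL; lia.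
have b12 : (#|`lcoset b H| < #|`A1| + #|`A2|)%N by rewrite cardL; lia.
have b21 : (#|`lcoset a H| < #|`A2| + #|`A1|)%N by rewrite cardL; lia.
clearbody A1 A2.
have i1 : H `<=` invprod A.
  apply/fsubsetP => h hH; apply: (key A1A A1A A1K _ b11).
  move=> x /(fsubsetP A1K) /lcosetP [k kH ->]; apply/lcosetP; exists (k * h).
    exact: HM.
  by rewrite mulgA.
have i2 : dcoset H c `<=` invprod A.
  apply/fsubsetP => g /dcosetP [h1 [h2 [h1H h2H ->]]].
  apply: (key A1A A2A A2K _ b12).
  move=> x /(fsubsetP A1K) /lcosetP [k kH ->].
  have [y yH e] := nL (k * h1) (HM _ _ kH h1H).
  apply/lcosetP; exists (y * h2); first exact: HM.
  have -> : b * (y * h2) = a * c * (y * h2) by rewrite -eb.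
  rewrite !mulgA; congr (_ * h2); rewrite -!mulgA; congr (a * _); by rewrite -e !mulgA.
have i3 : dcoset H c^-1 `<=` invprod A.
  apply/fsubsetP => g /dcosetP [h1 [h2 [h1H h2H ->]]].
  apply: (key A2A A1A A1K _ b21).
  move=> x /(fsubsetP A2K) /lcosetP [k kH ->].
  have [y yH e] := nR (k * h1) (HM _ _ kH h1H).
  apply/lcosetP; exists (y * h2); first exact: HM.
  have -> : b * k = a * c * k by rewrite -eb.
  rewrite !mulgA; congr (_ * h2); rewrite -!mulgA; congr (a * _).
  by rewrite !mulgA -(mulgA c k h1) e mulgK.
have i4 : invprod A `<=` H `|` dcoset H c `|` dcoset H c^-1.
  apply/fsubsetP => x /invprodP [u [v [uA vA ->]]].
  have := fsubsetP sA u uA; have := fsubsetP sA v vA; rewrite !in_fsetU.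
  case/orP => /lcosetP [k2 k2H ->]; case/orP => /lcosetP [k1 k1H ->].
  - by rewrite invgM -mulgA mulKg (HM _ _ (HV _ k1H) k2H).
  - apply/orP; right; apply/dcosetP; exists k1^-1, k2.
    by split => //; [exact: HV | rewrite invgM ebi !mulgA mulgVK].
  - apply/orP; left; apply/orP; right; apply/dcosetP; exists k1^-1, k2.
    by split => //; [exact: HV | rewrite invgM !mulgA -(mulgA k1^-1 a^-1 b) eab].
  - by rewrite invgM -mulgA mulKg (HM _ _ (HV _ k1H) k2H).
have E : invprod A = H `|` dcoset H c `|` dcoset H c^-1.
  apply/eqP; rewrite eqEfsubset i4 /=.
  by rewrite !fsubUset i1 i2 i3.
have d1 : [disjoint H & dcoset H c].
  apply/fdisjointP => x xH; apply/negP => /dcosetP [h1 [h2 [h1H h2H e]]].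
  have : c = h1^-1 * x * h2^-1 by rewrite e !mulgA mulVg mul1g mulgK.
  move=> ec; move: cnH; rewrite ec (HM _ _ (HM _ _ (HV _ h1H) xH) (HV _ h2H)) //.
have d2 : [disjoint H & dcoset H c^-1].
  apply/fdisjointP => x xH; apply/negP => /dcosetP [h1 [h2 [h1H h2H e]]].
  have : c^-1 = h1^-1 * x * h2^-1 by rewrite e !mulgA mulVg mul1g mulgK.
  move=> ec; move: cinH; rewrite ec (HM _ _ (HM _ _ (HV _ h1H) xH) (HV _ h2H)) //.
have d3 : [disjoint dcoset H c & dcoset H c^-1].
  apply/fdisjointP => x /dcosetP [h1 [h2 [h1H h2H ->]]].
  apply/negP => /dcosetP [h3 [h4 [h3H h4H e]]].
  have e2 : c * (h2 * h4^-1) * c = h1^-1 * h3.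
    transitivity (h1^-1 * (h1 * c * h2) * h4^-1 * c).
      by rewrite !mulgA mulVg mul1g.
    by rewrite e !mulgA mulgK mulgVK.
  have [y yH ey] := nR _ (HM _ _ h2H (HV _ h4H)).
  rewrite ey in e2.
  have : c * c = y^-1 * (h1^-1 * h3) by rewrite -e2 -(mulgA y c c) mulKg.
  move=> ecc; move: ncc; rewrite ecc (HM _ _ (HV _ yH) (HM _ _ (HV _ h1H) h3H)) //.
have s1 : dcoset H c = lcoset c H.
  apply/fsetP => x; apply/dcosetP/lcosetP.
    move=> [h1 [h2 [h1H h2H ->]]]; have [y yH ey] := nL _ h1H.
    by exists (y * h2); [exact: HM | rewrite ey mulgA].
  by move=> [h hH ->]; exists 1, h; rewrite mul1g.
have s2 : dcoset H c^-1 = lcoset c^-1 H.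
  apply/fsetP => x; apply/dcosetP/lcosetP.
    move=> [h1 [h2 [h1H h2H ->]]]; have [y yH ey] := nR _ h1H.
    exists (y * h2); first exact: HM.
    have : h1 * c^-1 = c^-1 * y.
      by rewrite -{1}(mulKg c h1) ey !mulgA mulgK.
    by move=> e'; rewrite e' mulgA.
  by move=> [h hH ->]; exists 1, h; rewrite mul1g.
have k1 : #|` dcoset H c| = #|` H| by rewrite s1 cardL.
have k2 : #|` dcoset H c^-1| = #|` H| by rewrite s2 cardL.
split; last first.
  by exists c, c^-1.
have dU : [disjoint H `|` dcoset H c & dcoset H c^-1] by rewrite fdisjointUX d2 d3.
have := cardfsUI (H `|` dcoset H c) (dcoset H c^-1).
have := cardfsUI H (dcoset H c).
rewrite (disjoint_fsetI0 dU) (disjoint_fsetI0 d1) !cardfs0 !addn0 -E k1 k2.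
move=> e2 e1; rewrite e2 in e1; rewrite e1; exact: arith3.
Qed.
End Aux.

Local Open Scope fset_scope.

Theorem proposition3p1 (G : groupType) (H A : {fset G}) (a b : G) :
  is_subgroup H ->
  A `<=` lcoset a H `|` lcoset b H ->
  in_normalizer H (mul (inv a) b) ->
  mul (mul (inv a) b) (mul (inv a) b) \notin H ->
  (* |A| > (9/5) |H| *)
  9 * #|` H| < 5 * #|` A| ->
  (* |A^{-1}A| < (5/3) |A| *)
  (3 * #|` invprod A| < 5 * #|` A|)%N /\
  exists g1 g2 : G,
    invprod A = H `|` dcoset H g1 `|` dcoset H g2 /\
    [disjoint H & dcoset H g1] /\ [disjoint H & dcoset H g2] /\
    [disjoint dcoset H g1 & dcoset H g2] /\
    #|` dcoset H g1| = #|` H| /\ #|` dcoset H g2| = #|` H|.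
Proof. exact: main. Qed.
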